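(* Suppose the fraction $\alpha$ of perfect labelers satisfies $\alpha\ge0.7$. There is an absolute constant $C$ such that, setting $N=\lceil C\log(1/\epsilon)\rceil$, the following holds. For a finite set $S\subseteq\mathcal{X}$ and classifier $h:\mathcal{X}\to\{+1,-1\}$, define $\textsc{Filter}(S,h)$: start with $S_I=\emptyset$; for each $x\in S$, for $t=1,\dots,N$, draw a fresh labeler $i\sim P$ independently and set $y_t=\ell_i(x)$; if $t$ is odd and the majority of $y_1,\dots,y_t$ equals $h(x)$, stop processing $x$ (discarding it); if this never happens for $t\le N$, add $x$ to $S_I$. Return $S_I$. Then for every $x\in S$: (1) if $h(x)=f^*(x)$, then $x\in\textsc{Filter}(S,h)$ with probability less than $\sqrt\epsilon$; (2) if $h(x)\ne f^*(x)$, then $x\in\textsc{Filter}(S,h)$ with probability at least $0.5$.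
   Context: There is an unknown target $f^*:\mathcal{X}\to\{+1,-1\}$. Labeler $i$ is a function $\ell_i:\mathcal{X}\to\{+1,-1\}$, perfect if $\ell_i$ agrees with $f^*$; non-perfect labelers are arbitrary fixed functions. $P$ is the uniform distribution over labelers and $\alpha$ is the $P$-probability that a labeler is perfect. $\epsilon\in(0,1)$. *)

(* Defs.v *)
From HB Require Import structures.
From mathcomp Require Import all_boot all_order all_algebra.
From mathcomp Require Import all_classical all_reals all_analysis.
From mathcomp Require Import Rstruct Rstruct_topology.
Set Implicit Arguments. Unset Strict Implicit. Unset Printing Implicit Defensive.
Import Order.TTheory GRing.Theory Num.Theory.
Local Open Scope ring_scope.

(* Labels {+1,-1} are encoded as bool (true = +1, false = -1).
   Labelers are indexed by a nonempty finite type I; P is uniform on I. *)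

Definition perfect (X : Type) (I : finType) (l : I -> X -> bool) (f : X -> bool)
  (i : I) : Prop := forall x, l i x = f x.

Definition alpha_perfect (X : Type) (I : finType) (l : I -> X -> bool)
  (f : X -> bool) : Rdefinitions.R :=
  #|[set i : I | `[< perfect l f i >]]|%:R / #|I|%:R.

(* Given the labels y_1..y_N obtained for a point (index t : 'I_N is round t+1),
   the point is discarded iff at some odd round t+1 <= N the majority of
   y_1..y_{t+1} equals hx (t+1 odd, so no ties: majority = strictly more than half). *)
Definition discarded (N : nat) (y : 'I_N -> bool) (hx : bool) : bool :=
  [exists t : 'I_N, odd t.+1 &&
     (t.+1 < 2 * #|[set s : 'I_N | (s <= t)%N && (y s == hx)]|)%N].

(* Filter(S,h): S is a duplicate-free list (finite set); omega k t is the labeler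
   drawn at round t+1 for the k-th point of S (all draws independent uniform). *)
Definition Filter (X : eqType) (I : finType) (N : nat) (l : I -> X -> bool)
  (S : seq X) (h : X -> bool) (omega : {ffun 'I_(size S) -> {ffun 'I_N -> I}}) : seq X :=
  pmap (fun k : 'I_(size S) =>
          match onth S k with
          | Some x => if discarded (fun t => l (omega k t) x) (h x) then None else Some x
          | None => None
          end) (enum 'I_(size S)).

Definition prob_in_filter (X : eqType) (I : finType) (N : nat) (l : I -> X -> bool)
  (S : seq X) (h : X -> bool) (x : X) : Rdefinitions.R :=
  #|[set omega : {ffun 'I_(size S) -> {ffun 'I_N -> I}} | x \in @Filter X I N l S h omega]|%:R
  / #|{ffun 'I_(size S) -> {ffun 'I_N -> I}}|%:R.

(* Main.v *)
Require Import Defs.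
From HB Require Import structures.
From mathcomp Require Import all_boot all_order all_algebra.
From mathcomp Require Import all_classical all_reals all_analysis.
From mathcomp Require Import Rstruct Rstruct_topology.
From Stdlib Require Import Lia.
From mathcomp Require Import zify ring lra.
Import Order.TTheory GRing.Theory Num.Theory.
Local Open Scope ring_scope.
Set Implicit Arguments. Unset Strict Implicit. Unset Printing Implicit Defensive.
Local Notation RR := Rdefinitions.R.

Definition consf (T : Type) n (i : T) (w : 'I_n -> T) : 'I_n.+1 -> T :=
  fun t => if unlift ord0 t is Some t' then w t' else i.

Lemma sum_ffunS (T : finType) n (G : {ffun 'I_n.+1 -> T} -> RR) :
  \sum_(w : {ffun 'I_n.+1 -> T}) G w =
  \sum_(i : T) \sum_(w : {ffun 'I_n -> T}) G (finfun (consf i w)).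
Proof.
rewrite pair_big /=.
rewrite (reindex (fun p : T * {ffun 'I_n -> T} => finfun (consf p.1 p.2))) //.
exists (fun w : {ffun 'I_n.+1 -> T} => (w ord0, [ffun t => w (lift ord0 t)])).
  move=> [i w] _ /=; congr pair; first by rewrite ffunE /consf unlift_none.
  by apply/ffunP => t; rewrite !ffunE /consf liftK.
move=> w _; apply/ffunP => t; rewrite !ffunE /consf /=.
by case: unliftP => [j ->|->]; rewrite ?ffunE.
Qed.

Section Walk.
Variables (I : finType) (g : I -> bool).

Definition Eg n (F : ('I_n -> bool) -> RR) : RR :=
  \sum_(w : {ffun 'I_n -> I}) F (fun t => g (w t)).
Arguments Eg : clear implicits.

Definition consb n (b : bool) (z : 'I_n -> bool) : 'I_n.+1 -> bool := consf b z.

Lemma EgS n F : Eg n.+1 F = \sum_(i : I) Eg n (fun z => F (consb (g i) z)).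
Proof.
rewrite /Eg sum_ffunS; apply: eq_bigr => i _; apply: eq_bigr => w _.
congr F; apply: funext => t; rewrite ffunE /consb /consf.
by case: unlift.
Qed.

Lemma Eg_le n F G : (forall z, F z <= G z) -> Eg n F <= Eg n G.
Proof. by move=> H; apply: ler_sum => w _; apply: H. Qed.

Lemma Eg_const n c : Eg n (fun _ => c) = c * (#|I|%:R) ^+ n.
Proof.
by rewrite /Eg sumr_const card_ffun card_ord -[c *+ _]mulr_natr natrX.
Qed.

Lemma Eg_scale n k F : Eg n (fun z => k * F z) = k * Eg n F.
Proof. by rewrite /Eg mulr_sumr. Qed.

Lemma Eg_sub n F G : Eg n (fun z => F z - G z) = Eg n F - Eg n G.
Proof. by rewrite /Eg sumrB. Qed.

End Walk.
Arguments Eg {I} g n F.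

Definition discG (a c n : nat) (z : 'I_n -> bool) : bool :=
  [exists t : 'I_n, odd (a + t.+1) &&
     (a + t.+1 < 2 * (c + \sum_(s < n | (s <= t)%N) (z s : nat)))%N].

Lemma sum_le_recl n (z : 'I_n.+1 -> bool) (t : nat) :
  (\sum_(s < n.+1 | (s <= t.+1)%N) (z s : nat) =
   z ord0 + \sum_(s < n | (s <= t)%N) (z (lift ord0 s) : nat))%N.
Proof.
rewrite big_mkcond big_ord_recl /= [in RHS]big_mkcond /=; congr addn.
Qed.

Lemma sum_le0 n (z : 'I_n.+1 -> bool) :
  (\sum_(s < n.+1 | (s <= 0)%N) (z s : nat) = z ord0)%N.
Proof.
by rewrite big_mkcond big_ord_recl /= big1 ?addn0 // => s _; rewrite lift0.
Qed.

Lemma discG_E0 a c n (z : 'I_n.+1 -> bool) :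
  (odd (a + (@ord0 n).+1) && (a + (@ord0 n).+1 < 2 * (c + \sum_(s < n.+1 | (s <= @ord0 n)%N) (z s : nat)))%N)
   = (odd a.+1 && (a.+1 < 2 * (c + z ord0))%N).
Proof. by rewrite (sum_le0 z) addn1. Qed.

Lemma discG_E1 a c n (z : 'I_n.+1 -> bool) (j : 'I_n) :
  (odd (a + (lift ord0 j).+1) && (a + (lift ord0 j).+1 < 2 * (c + \sum_(s < n.+1 | (s <= lift ord0 j)%N) (z s : nat)))%N)
   = (odd (a.+1 + j.+1) && (a.+1 + j.+1 < 2 * (c + z ord0 + \sum_(s < n | (s <= j)%N) (z (lift ord0 s) : nat)))%N).
Proof. by rewrite lift0 sum_le_recl addSnnS addnA. Qed.

Lemma discGS a c n (z : 'I_n.+1 -> bool) :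
  discG a c z = (odd a.+1 && (a.+1 < 2 * (c + z ord0))%N) ||
                discG a.+1 (c + z ord0) (fun t => z (lift ord0 t)).
Proof.
rewrite /discG.
apply/existsP/orP.
- case=> t; case: (unliftP ord0 t) => [j ->|->].
    by rewrite discG_E1 => H; right; apply/existsP; exists j.
  by rewrite discG_E0 => H; left.
- case=> [H|/existsP [j H]]; first by exists ord0; rewrite discG_E0.
  by exists (lift ord0 j); rewrite discG_E1.
Qed.

Lemma discG_final n a c (z : 'I_n -> bool) : (2 * c <= a)%N -> ~~ discG a c z ->
  (2 * (c + \sum_(s < n) (z s : nat)) <= a + n)%N.
Proof.
elim: n a c z => [|n IH] a c z Hac.
  by rewrite big_ord0 addn0 addn0.
rewrite discGS negb_or => /andP [H0 H1].
have Hac' : (2 * (c + z ord0) <= a.+1)%N.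
  move: H0; case: (z ord0) => /=; last by rewrite addn0 => _; lia.
  case: (boolP (2 * c == a)%N) => [/eqP <-|Hne]; last by lia.
  by move=> /negP H; exfalso; apply: H; apply/andP; split; [rewrite oddM | lia].
have := IH _ _ _ Hac' H1.
rewrite big_ord_recl /=. lia.
Qed.

Lemma consb0 n b (z : 'I_n -> bool) : consb b z ord0 = b.
Proof. by rewrite /consb /consf unlift_none. Qed.

Lemma consbL n b (z : 'I_n -> bool) : (fun t => consb b z (lift ord0 t)) = z.
Proof. by apply: funext => t; rewrite /consb /consf liftK. Qed.

Lemma consbS n b (z : 'I_n -> bool) t : consb b z (lift ord0 t) = z t.
Proof. by rewrite /consb /consf liftK. Qed.

Lemma discG0 a c (z : 'I_0 -> bool) : discG a c z = false.
Proof. by apply/existsP; case=> [[]]. Qed.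

Lemma sum_bool_le n (z : 'I_n -> bool) : (\sum_(s < n) (z s : nat) <= n)%N.
Proof.
rewrite -[X in (_ <= X)%N]card_ord -sum1_card.
by apply: leq_sum => s _; case: (z s).
Qed.

Section Bounds.
Variables (I : finType) (g : I -> bool).

Lemma disc_bound (rho : RR) : 0 <= rho ->
  \sum_(i : I) (if g i then 1 else rho ^+ 2) <= #|I|%:R * rho ->
  forall n a c, (2 * c <= a)%N ->
  Eg g n (fun z => (discG a c z)%:R) <= (#|I|%:R) ^+ n * rho ^+ (a.+1 - 2 * c).
Proof.
move=> r0 Hs; elim=> [|n IH] a c Hac.
  apply: (@le_trans _ _ (Eg g 0 (fun _ => 0))).
    by apply: Eg_le => z; rewrite discG0.
  by rewrite Eg_const mul0r mulr_ge0 // exprn_ge0.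
rewrite EgS.
set e := (a.+1 - 2 * c)%N.
apply: (@le_trans _ _ (\sum_(i : I) ((#|I|%:R) ^+ n * rho ^+ e.-1 * (if g i then 1 else rho ^+ 2)))).
  apply: ler_sum => i _.
  under eq_fun => z do rewrite discGS consb0 consbL.
  case: (g i).
    case: (boolP (2 * c == a)%N) => [/eqP Ea|Ne].
      apply: (@le_trans _ _ (Eg g n (fun _ => 1))).
        by apply: Eg_le => z; case: (_ || _).
      rewrite Eg_const mul1r mulr1.
      have -> : e.-1 = 0%N by rewrite /e -Ea; lia.
      by rewrite expr0 mulr1.
    have -> : (odd a.+1 && (a.+1 < 2 * (c + true))%N) = false.
      by apply/negbTE; rewrite negb_and; apply/orP; right; rewrite -leqNgt; lia.
    rewrite mulr1.
    have -> : e.-1 = (a.+2 - 2 * (c + true))%N by rewrite /e /=; lia.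
    by apply: IH => /=; lia.
  have -> : (odd a.+1 && (a.+1 < 2 * (c + false))%N) = false.
    by apply/negbTE; rewrite negb_and; apply/orP; right; rewrite -leqNgt; lia.
  rewrite -mulrA -exprD.
  have -> : (e.-1 + 2 = a.+2 - 2 * (c + false))%N by rewrite /e /=; lia.
  by apply: IH => /=; lia.
rewrite -mulr_sumr.
apply: (@le_trans _ _ ((#|I|%:R) ^+ n * rho ^+ e.-1 * (#|I|%:R * rho))).
  by apply: ler_wpM2l => //; rewrite mulr_ge0 // exprn_ge0.
have He : e = e.-1.+1 by rewrite /e; lia.
rewrite [in X in _ <= X]He exprS exprSr.
by rewrite le_eqVlt; apply/orP; left; apply/eqP; ring.
Qed.

Definition phi (b : bool) : RR := if b then 2 / 3 else 3 / 2.
Definition Wgt n (z : 'I_n -> bool) : RR := \prod_(t < n) phi (z t).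

Lemma Eg_prod n : Eg g n (@Wgt n) = (\sum_(i : I) phi (g i)) ^+ n.
Proof.
elim: n => [|n IH].
  by rewrite /Wgt; under eq_fun => z do rewrite big_ord0; rewrite Eg_const mul1r expr0 expr0.
rewrite EgS exprS mulr_suml; apply: eq_bigr => i _.
rewrite /Wgt; under eq_fun => z do rewrite big_ord_recl consb0.
by rewrite Eg_scale; under eq_fun => z do under eq_bigr => t _ do rewrite consbS; rewrite -IH.
Qed.

End Bounds.

Lemma Wgt_closed n (z : 'I_n -> bool) :
  Wgt z = (3 / 2) ^+ (n - \sum_(s < n) (z s : nat)) * (2 / 3) ^+ (\sum_(s < n) (z s : nat)).
Proof.
elim: n z => [|n IH] z; first by rewrite /Wgt !big_ord0 expr0 expr0 mulr1.
have hk := sum_bool_le (fun t => z (lift ord0 t)).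
have E := IH (fun t => z (lift ord0 t)); rewrite /Wgt in E.
rewrite /Wgt big_ord_recl E big_ord_recl /phi.
case: (z ord0) => /=.
  by rewrite add1n subSS exprS; ring.
by rewrite add0n subSn // exprS; ring.
Qed.

Lemma Wgt_ge1 n (z : 'I_n -> bool) : (2 * \sum_(s < n) (z s : nat) <= n)%N -> 1 <= Wgt z.
Proof.
move=> H; rewrite Wgt_closed.
set k := (\sum_(s < n) (z s : nat))%N.
have -> : (n - k = (n - 2 * k) + k)%N by rewrite /k; lia.
rewrite exprD -mulrA -exprMn.
have -> : (3 / 2 : RR) * (2 / 3) = 1 by field.
by rewrite expr1n mulr1 exprn_ege1 // ler_pdivlMr // mul1r ler_nat.
Qed.

Lemma nodisc_le n (z : 'I_n -> bool) : ((~~ discG 0 0 z)%:R : RR) <= Wgt z.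
Proof.
case: (boolP (discG 0 0 z)) => Hd /=.
  by apply: prodr_ge0 => t _; rewrite /phi; case: (z t).
apply: Wgt_ge1.
by have := @discG_final n 0 0 z (leqnn 0) Hd; rewrite !add0n.
Qed.

Lemma card_R (T : finType) (P : pred T) :
  (#|[set w | P w]|%:R : RR) = \sum_(w : T) ((P w)%:R : RR).
Proof.
rewrite -sum1_card natr_sum [LHS]big_mkcond /=; apply: eq_bigr => w _.
by rewrite inE; case: (P w).
Qed.

Lemma card_set_sum n (P Q : pred 'I_n) :
  #|[set s | P s && Q s]| = (\sum_(s < n | P s) (Q s : nat))%N.
Proof.
rewrite -sum1_card [LHS]big_mkcond [RHS]big_mkcond /=; apply: eq_bigr => s _.
by rewrite inE; case: (P s); case: (Q s).
Qed.

Lemma discarded_discG N (y : 'I_N -> bool) hx :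
  discarded y hx = discG 0 0 (fun t => y t == hx).
Proof.
rewrite /discarded /discG; apply: eq_existsb => t.
by rewrite card_set_sum !add0n.
Qed.

Lemma card_ffun_coord (A B : finType) (a0 : A) (Q : pred B) :
  #|[set f : {ffun A -> B} | Q (f a0)]| = (#|[set b | Q b]| * #|B| ^ #|A|.-1)%N.
Proof.
pose F (a : A) (b : B) : nat := if a == a0 then (Q b : nat) else 1%N.
have H1 : #|[set f : {ffun A -> B} | Q (f a0)]| = (\sum_(f : {ffun A -> B}) \prod_(a : A) F a (f a))%N.
  rewrite -sum1_card [LHS]big_mkcond /=; apply: eq_bigr => f _.
  rewrite (bigD1 a0) //= /F eqxx big1 ?muln1; first by rewrite inE; case: (Q (f a0)).
  by move=> a /negbTE ->.
rewrite H1 -bigA_distr_bigA (bigD1 a0) //= /F eqxx.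
congr muln.
  by rewrite -sum1_card [RHS]big_mkcond /=; apply: eq_bigr => b _; rewrite inE; case: (Q b).
rewrite (eq_bigr (fun _ => #|B|)); last first.
  move=> a /negbTE ->; by rewrite sum1_card.
by rewrite prod_nat_const cardC1.
Qed.

Lemma onth_index (X : eqType) (S : seq X) x : x \in S -> onth S (index x S) = Some x.
Proof.
move=> Hx; rewrite onthE (nth_map x); last by rewrite index_mem.
by rewrite nth_index.
Qed.

Lemma mem_Filter (X : eqType) (I : finType) N (l : I -> X -> bool) (S : seq X) h omega x
  (k0 : 'I_(size S)) : x \in S -> uniq S -> nat_of_ord k0 = index x S ->
  (x \in @Defs.Filter X I N l S h omega) = ~~ discarded (fun t => l (omega k0 t) x) (h x).
Proof.
move=> Hx Hu Hk; rewrite /Defs.Filter mem_pmap; apply/mapP/idP.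
- case=> k _; case E: (onth S k) => [x'|] //.
  case: ifP => // Hd [Ex]; subst x'.
  have Hkk : k = k0.
    have Hn : nth x S k = x by apply: onth_nth.
    by apply: val_inj => /=; rewrite Hk -{1}Hn index_uniq.
  by subst k; rewrite Hd.
- move=> H; exists k0; first by rewrite mem_enum.
  by rewrite Hk onth_index // (negbTE H).
Qed.

Lemma prob_reduce (X : eqType) (I : finType) N (l : I -> X -> bool) (S : seq X) h x :
  x \in S -> uniq S -> (0 < #|I|)%N ->
  prob_in_filter N l S h x =
  #|[set w : {ffun 'I_N -> I} | ~~ discarded (fun t => l (w t) x) (h x)]|%:R / (#|I|%:R ^+ N).
Proof.
move=> Hx Hu HI.
have Hk : (index x S < size S)%N by rewrite index_mem.
pose k0 := Ordinal Hk.
rewrite /prob_in_filter.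
have Heq : [set omega | x \in @Defs.Filter X I N l S h omega] =
  [set omega : {ffun 'I_(size S) -> {ffun 'I_N -> I}} | ~~ discarded (fun t => l (omega k0 t) x) (h x)].
  by apply/setP => omega; rewrite !inE (@mem_Filter X I N l S h omega x k0 Hx Hu (erefl _)).
rewrite Heq.
rewrite (@card_ffun_coord _ _ k0 (fun w : {ffun 'I_N -> I} => ~~ discarded (fun t => l (w t) x) (h x))).
rewrite !card_ord card_ffun card_ord.
have Hs : size S = (size S).-1.+1 by rewrite prednK // (leq_ltn_trans (leq0n _) Hk).
rewrite !card_ffun !card_ord natrM !natrX Hs /= exprS.
have HI0 : (#|I|%:R : RR) ^+ N != 0 by rewrite expf_neq0 // pnatr_eq0 -lt0n.
field.
by rewrite HI0 /= expf_neq0.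
Qed.

Lemma sum_affine (I : finType) (a b : RR) (P : I -> RR) :
  \sum_(i : I) (a + b * P i) = a * #|I|%:R + b * \sum_(i : I) P i.
Proof. by rewrite big_split /= sumr_const -mulr_sumr mulr_natr. Qed.

Lemma eps_bound (eps : RR) (N : nat) : 0 < eps -> eps < 1 ->
  12 * ln (eps^-1) <= N%:R -> (11 / 12) ^+ N < Num.sqrt eps.
Proof.
move=> e0 e1 HN.
have Hlt : eps < Num.sqrt eps.
  have H2 : eps ^+ 2 < eps by rewrite expr2 -{3}(mulr1 eps) ltr_pM2l.
  have := H2; rewrite -(ltr_sqrt _ e0) sqrtr_sqr ger0_norm //; exact: ltW.
apply: le_lt_trans Hlt.
have H1 : 11 / 12 <= expR (- (1 / 12) : RR).
  by apply: le_trans (expR_ge1Dx _); lra.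
apply: (@le_trans _ _ (expR (- (1 / 12) : RR) ^+ N)).
  by apply: lerXn2r => //; rewrite nnegrE //; lra.
rewrite -expRM_natl.
have -> : eps = expR (- ln (eps^-1)).
  by rewrite expRN lnK ?invrK // posrE invr_gt0.
rewrite ler_expR; lra.
Qed.

Lemma N_bound (eps : RR) : 0 < eps -> eps < 1 ->
  12 * ln (eps^-1) <= (`|Num.ceil (12 * ln (eps^-1))|%N)%:R.
Proof.
move=> e0 e1.
have HL : 0 < ln (eps^-1) by apply: ln_gt0; rewrite invf_gt1.
have Hc : (0 <= Num.ceil (12 * ln (eps^-1)))%R by rewrite ceil_ge0; lra.
by rewrite natr_absz ger0_norm //; apply: ceil_ge.
Qed.

Lemma arith1 (n sp : RR) : 7 / 10 * n <= sp -> 3 / 2 * n + - (5 / 6) * sp <= 11 / 12 * n.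
Proof. lra. Qed.

Lemma pt1 (b : bool) (p : RR) : p = 0 \/ (p = 1 /\ b) -> phi b <= 3 / 2 + - (5 / 6) * p.
Proof. by rewrite /phi; case=> [->|[-> ->]]; case: b => //; lra. Qed.

Lemma pt2 (b : bool) (p : RR) : p = 0 \/ (p = 1 /\ ~~ b) ->
  (if b then 1 else (3 / 7) ^+ 2) <= (3 / 7) ^+ 2 + (1 - (3 / 7) ^+ 2) * (1 - p).
Proof. by case=> [->|[-> /negbTE ->]]; case: b => //; lra. Qed.

Lemma arith2 (n sp : RR) : 7 / 10 * n <= sp ->
  (3 / 7) ^+ 2 * n + (1 - (3 / 7) ^+ 2) * (n - sp) <= n * (3 / 7).
Proof. lra. Qed.

Lemma arith3 (n e : RR) : 0 < n -> e <= n * (3 / 7) -> 1 / 2 * n <= 1 * n - e.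
Proof. lra. Qed.

Lemma sum_affine2 (I : finType) (a b : RR) (P : I -> RR) :
  \sum_(i : I) (a + b * (1 - P i)) = a * #|I|%:R + b * (#|I|%:R - \sum_(i : I) P i).
Proof. by rewrite big_split /= -mulr_sumr sumrB !sumr_const -[a *+ _]mulr_natr. Qed.

Unset Implicit Arguments.

Theorem lemma6 :
  exists C : Rdefinitions.R, 0 < C /\
  forall (eps : Rdefinitions.R), 0 < eps -> eps < 1 ->
  forall (X : eqType) (I : finType) (l : I -> X -> bool) (f : X -> bool),
    (0 < #|I|)%N ->
    7 / 10 <= alpha_perfect l f ->
  forall (S : seq X) (h : X -> bool), uniq S ->
  let N := `|Num.ceil (C * ln (eps^-1))|%N in
  forall x, x \in S ->
    (h x = f x -> prob_in_filter N l S h x < Num.sqrt eps) /\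
    (h x <> f x -> 1 / 2 <= prob_in_filter N l S h x).
Proof.
exists 12; split; first by lra.
move=> eps e0 e1 X I l f HI Ha S h Hu N x Hx.
pose g := fun i => l i x == h x.
have HIR : (0 : RR) < #|I|%:R by rewrite ltr0n.
have HIN : (0 : RR) < #|I|%:R ^+ N by rewrite exprn_gt0.
have Hred : prob_in_filter N l S h x = Eg g N (fun z => (~~ discG 0 0 z)%:R) / #|I|%:R ^+ N.
  rewrite prob_reduce // card_R /Eg; congr (_ / _); apply: eq_bigr => w _.
  by rewrite discarded_discG.
pose pp := fun i => ((`[< perfect l f i >]) : bool)%:R : RR.
have Hp : 7 / 10 * #|I|%:R <= \sum_(i : I) pp i.
  move: Ha; rewrite /alpha_perfect card_R ler_pdivlMr //.
have Hpp : forall i, pp i = 0 \/ (pp i = 1 /\ l i x = f x).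
  move=> i; rewrite /pp; case: (asboolP (perfect l f i)) => /= H; last by left.
  by right; split => //; apply: H.
have HN : 12 * ln (eps^-1) <= N%:R by apply: N_bound.
split => Hh.
- rewrite Hred.
  apply: le_lt_trans (eps_bound e0 e1 HN).
  rewrite ler_pdivrMr //.
  apply: (@le_trans _ _ (Eg g N (@Wgt N))).
    by apply: Eg_le => z; apply: nodisc_le.
  rewrite Eg_prod -exprMn.
  apply: lerXn2r; rewrite ?nnegrE //.
  + by apply: sumr_ge0 => i _; rewrite /phi; case: (g i).
  +  apply: (@le_trans _ _ (\sum_(i : I) (3 / 2 + (- (5 / 6)) * pp i))).
    apply: ler_sum => i _; apply: pt1.
    case: (Hpp i) => [->|[-> E]]; first by left.
    by right; split => //; rewrite /g E Hh eqxx.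
  by rewrite sum_affine; apply: arith1.
- rewrite Hred.
  have Hneg : forall z : 'I_N -> bool, ((~~ discG 0 0 z)%:R : RR) = 1 - (discG 0 0 z)%:R.
    by move=> z; case: (discG 0 0 z) => /=; rewrite ?subr0 ?subrr.
  under eq_fun => z do rewrite Hneg.
  rewrite Eg_sub Eg_const ler_pdivlMr //.
  have r0 : (0 : RR) <= 3 / 7 by rewrite divr_ge0.
  have Hb := @disc_bound I g (3 / 7) r0.
  apply: arith3 => //.
  have := Hb _ N 0 0 (leqnn 0); rewrite expr1; apply.
  apply: (@le_trans _ _ (\sum_(i : I) ((3 / 7) ^+ 2 + (1 - (3 / 7) ^+ 2) * (1 - pp i)))).
    apply: ler_sum => i _; apply: pt2.
    case: (Hpp i) => [->|[-> E]]; first by left.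
    right; split => //; rewrite /g E; apply/negP => /eqP Hc; apply: Hh; by rewrite Hc.
  by rewrite sum_affine2; apply: arith2.
Qed.
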